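(* Let $\{I_x\}_{x\in(0,1]}$ be a family of nonempty half-open intervals of the form $I_x=(y_x,x]\subset(0,1]$ (so $0\le y_x<x$). Then there exists a set $C\subset(0,1]$ such that $\bigcup_{x\in C}I_x=(0,1]$ and the intervals $I_y$, $I_z$ are disjoint whenever $y,z\in C$, $y\ne z$. *)

(* Defs.v *)
From Stdlib Require Import Reals.
Open Scope R_scope.

Definition Ioc (a b : R) : R -> Prop := fun t => a < t /\ t <= b.

(* Main.v *)
Require Import Defs.
From Stdlib Require Import Reals Lra Classical.
Open Scope R_scope.

Definition disj (y : R -> R) (D : R -> Prop) :=
  forall u v, D u -> D v -> u <> v -> forall t, ~ (Ioc (y u) u t /\ Ioc (y v) v t).

Definition Good (y : R -> R) (a : R) (D : R -> Prop) :=
  (forall x, D x -> 0 < x <= 1) /\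
  (forall t, (a < t <= 1) <-> exists x, D x /\ Ioc (y x) x t) /\ disj y D.

Lemma Rmax_lt' a b c : a < c -> b < c -> Rmax a b < c.
Proof. unfold Rmax; destruct (Rle_dec a b); lra. Qed.

Lemma compat y a a' D D' : Good y a D -> Good y a' D' ->
  forall x x' t, D x -> D' x' -> Ioc (y x) x t -> Ioc (y x') x' t -> x = x'.
Proof.
  intros [HD1 [HD2 HD3]] [HE1 [HE2 HE3]] x x' t Dx Ex It It'.
  destruct (Req_dec x x') as [|Hne]; [assumption| exfalso].
  pose (m := Rmax a a').
  assert (ma : a <= m) by apply Rmax_l.
  assert (ma' : a' <= m) by apply Rmax_r.
  pose (B := fun s => m < s <= 1 /\ exists z z', D z /\ D' z' /\ z <> z' /\
                 Ioc (y z) z s /\ Ioc (y z') z' s).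
  assert (step : forall s, B s -> exists s', s < s' /\ B s').
  { intros s [[Hms Hs1] [z [z' [Dz [Ez' [Hzz [Iz Iz']]]]]]].
    pose proof (HD1 z Dz). pose proof (HE1 z' Ez').
    unfold Ioc in Iz, Iz'.
    destruct (Rlt_or_le z z') as [Hlt|Hle].
    - destruct (proj1 (HD2 z')) as [w [Dw Iw]]; [lra|].
      exists z'; split; [lra|]. split; [lra|].
      exists w, z'. split; [exact Dw|]. split; [exact Ez'|].
      split; [|split; [exact Iw| unfold Ioc; lra]].
      intro Hw; subst w. apply (HD3 z' z Dw Dz (fun e => Hzz (eq_sym e)) s).
      unfold Ioc; lra.
    - assert (z' < z) by (destruct Hle; [assumption| subst; tauto]).
      destruct (proj1 (HE2 z)) as [w [Dw Iw]]; [lra|].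
      exists z; split; [lra|]. split; [lra|].
      exists z, w. split; [exact Dz|]. split; [exact Dw|].
      split; [|split; [unfold Ioc; lra| exact Iw]].
      intro Hw; subst w. apply (HE3 z z' Dw Ez' Hzz s). unfold Ioc; lra. }
  assert (Bt : B t).
  { pose proof (proj2 (HD2 t) (ex_intro _ x (conj Dx It))).
    pose proof (proj2 (HE2 t) (ex_intro _ x' (conj Ex It'))).
    split; [split; [apply Rmax_lt'; lra | lra] |].
    exists x, x'. split; [exact Dx|]. split; [exact Ex|]. split; [exact Hne|]. split; assumption. }
  assert (bB : bound B) by (exists 1; intros s [[_ H] _]; exact H).
  destruct (completeness B bB (ex_intro _ t Bt)) as [u [Hub Hleast]].
  assert (tu : t <= u) by (apply Hub; exact Bt).
  assert (u1 : u <= 1) by (apply Hleast; intros s [[_ H] _]; exact H).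
  assert (mu : m < u) by (destruct Bt as [[? ?] _]; lra).
  destruct (proj1 (HD2 u)) as [w [Dw Iw]]; [lra|].
  destruct (proj1 (HE2 u)) as [w' [Ew' Iw']]; [lra|].
  destruct (Req_dec w w') as [Heq|Hne'].
  - subst w'.
    destruct (classic (exists s, B s /\ Rmax (y w) m < s)) as [[s [Bs Hs]]|Hn].
    + assert (sy : y w < s /\ m < s).
      { split; eapply Rle_lt_trans; [apply Rmax_l| exact Hs | apply Rmax_r | exact Hs]. }
      assert (su : s <= u) by (apply Hub; exact Bs).
      destruct Bs as [_ [z [z' [Dz [Ez' [Hzz [Iz Iz']]]]]]].
      unfold Ioc in Iw.
      assert (z = w).
      { destruct (Req_dec z w) as [|Hzw]; [assumption|].
        exfalso; apply (HD3 z w Dz Dw Hzw s); split; [assumption| unfold Ioc; lra]. }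
      assert (z' = w).
      { destruct (Req_dec z' w) as [|Hzw]; [assumption|].
        exfalso; apply (HE3 z' w Ez' Ew' Hzw s); split; [assumption| unfold Ioc; lra]. }
      apply Hzz; congruence.
    + assert (Hup : is_upper_bound B (Rmax (y w) m)).
      { intros s Bs. apply Rnot_lt_le; intro; apply Hn; eauto. }
      pose proof (Hleast _ Hup).
      unfold Ioc in Iw.
      assert (Rmax (y w) m < u) by (apply Rmax_lt'; lra). lra.
  - assert (Bu : B u).
    { split; [lra|]. exists w, w'. split; [exact Dw|]. split; [exact Ew'|]. split; [exact Hne'|]. split; assumption. }
    destruct (step u Bu) as [s' [Hs' Bs']].
    pose proof (Hub s' Bs'). lra.
Qed.

Theorem mainTheorem11 (y : R -> R)
  (hy : forall x, 0 < x <= 1 -> 0 <= y x < x) :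
  exists C : R -> Prop,
    (forall x, C x -> 0 < x <= 1) /\
    (forall t, (0 < t <= 1) <-> exists x, C x /\ Ioc (y x) x t) /\
    (forall u v, C u -> C v -> u <> v ->
       forall t, ~ (Ioc (y u) u t /\ Ioc (y v) v t)).
Proof.
  pose (T := fun a => 0 <= a <= 1 /\ exists D, Good y a D).
  assert (T1 : T 1).
  { split; [lra|]. exists (fun _ => False). split; [tauto|]. split; [|intros u; tauto].
    intro t; split; [lra| intros [x [[] _]]]. }
  pose (E := fun z => exists a, T a /\ z = - a).
  assert (bE : bound E).
  { exists 0. intros z [a [[[Ha _] _] ->]]. lra. }
  destruct (completeness E bE (ex_intro _ (-1) (ex_intro _ 1 (conj T1 eq_refl))))
    as [L [HubL HleL]].
  pose (as_ := - L).
  assert (lowb : forall a, T a -> as_ <= a).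
  { intros a Ta. assert (- a <= L) by (apply HubL; exists a; auto). unfold as_; lra. }
  assert (glb : forall v, as_ < v -> exists a, T a /\ a < v).
  { intros v Hv. apply NNPP; intro Hn.
    assert (is_upper_bound E (- v)).
    { intros z [a [Ta ->]]. apply Ropp_le_contravar. apply Rnot_lt_le. intro; apply Hn; eauto. }
    pose proof (HleL _ H). unfold as_ in Hv; lra. }
  assert (as0 : 0 <= as_).
  { assert (L <= 0) by (apply HleL; intros z [a [[[Ha _] _] ->]]; lra). unfold as_; lra. }
  assert (as1 : as_ <= 1) by (apply lowb; exact T1).
  pose (C := fun x => exists a D, T a /\ Good y a D /\ D x).
  assert (Crange : forall x, C x -> 0 < x <= 1).
  { intros x [a [D [_ [[H1 _] Dx]]]]. auto. }
  assert (Cdisj : disj y C).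
  { intros u v [a [D [_ [GD Du]]]] [a' [D' [_ [GD' Dv]]]] Huv t [It It'].
    apply Huv. exact (compat y a a' D D' GD GD' u v t Du Dv It It'). }
  assert (Cint : forall x t, C x -> Ioc (y x) x t -> as_ < t <= 1).
  { intros x t [a [D [Ta [[_ [H2 _]] Dx]]]] It.
    pose proof (proj2 (H2 t) (ex_intro _ x (conj Dx It))). pose proof (lowb a Ta). lra. }
  assert (Ccov : forall t, as_ < t <= 1 -> exists x, C x /\ Ioc (y x) x t).
  { intros t Ht. destruct (glb t (proj1 Ht)) as [a [Ta Hat]].
    destruct Ta as [Ha [D GD]]. pose proof GD as [_ [H2 _]].
    destruct (proj1 (H2 t)) as [x [Dx It]]; [lra|].
    exists x; split; [|exact It]. exists a, D. split; [split; [exact Ha| exists D; exact GD]|]. split; [exact GD| exact Dx]. }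
  assert (as_eq : as_ = 0).
  { destruct as0 as [Hpos|]; [exfalso|auto].
    pose proof (hy as_ (conj Hpos as1)) as Hya.
    pose (D' := fun x => C x \/ x = as_).
    assert (TD : T (y as_)).
    { split; [lra|]. exists D'. split; [|split].
      - intros x [Cx| ->]; [auto| lra].
      - intro t; split.
        + intro Ht. destruct (Rle_or_lt t as_).
          * exists as_; split; [right; reflexivity| unfold Ioc; lra].
          * destruct (Ccov t) as [x [Cx It]]; [lra|]. exists x; split; [left|]; auto.
        + intros [x [[Cx| ->] It]].
          * pose proof (Cint x t Cx It). lra.
          * unfold Ioc in It; lra.
      - intros u v Du Dv Huv t [It It']. destruct Du as [Cu| ->]; destruct Dv as [Cv| ->].
        + exact (Cdisj u v Cu Cv Huv t (conj It It')).
        + pose proof (Cint u t Cu It). unfold Ioc in It'; lra.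
        + pose proof (Cint v t Cv It'). unfold Ioc in It; lra.
        + apply Huv; reflexivity. }
    pose proof (lowb _ TD). lra. }
  exists C. split; [exact Crange|]. split; [|exact Cdisj].
  intro t; split.
  - intro Ht. apply Ccov. lra.
  - intros [x [Cx It]]. pose proof (Cint x t Cx It). lra.
Qed.
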